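(* Let $G$ be a finite graph with $\chi_c(G)=\frac{n}{d}$ where $\gcd(n,d)=1$. If $d\ge 2$ (equivalently, $\chi_c(G)\neq\chi(G)$), then $\phi(G)\le \left\lceil \chi_c(G)\left(1+\frac{1}{d-1}\right)\right\rceil\le 2\chi(G)-1$.
   Context: For integers $n\ge 2d\ge 2$, the circular complete graph $K_{n/d}$ has vertex set $\{0,1,\dots,n-1\}$, with $i$ adjacent to $j$ iff $d\le |i-j|\le n-d$. The circular chromatic number $\chi_c(G)$ is the minimum of $n/d$ (with $\gcd(n,d)=1$) such that $G$ admits a homomorphism to $K_{n/d}$; $\chi(G)$ is the chromatic number. An independent set of $G$ is a free independent set if it is contained in at least two distinct maximal independent sets of $G$. The free chromatic number $\phi(G)$ is the minimum positive integer $t$ such that $V(G)$ can be partitioned into $t$ free independent sets of $G$ ($\phi(G)=\infty$ if no such partition exists). *)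

(* Defs.v *)
(* Finite simple graphs as a symmetric irreflexive relation on a finType. *)
From HB Require Import structures.
From mathcomp Require Import all_boot all_order all_algebra.
Set Implicit Arguments. Unset Strict Implicit. Unset Printing Implicit Defensive.
Import Order.TTheory GRing.Theory Num.Theory.

Section Graphs.
Variable T : finType.
Variable e : rel T.

Definition absdiff (i j : nat) : nat := (i - j) + (j - i).

(* adjacency in the circular complete graph K_{n/d}: d <= |i-j| <= n-d *)
Definition circ_adj (n d : nat) (i j : 'I_n) : bool :=
  (d <= absdiff i j) && (absdiff i j <= n - d).

Definition circ_hom (n d : nat) : Prop :=
  exists f : T -> 'I_n, forall u v, e u v -> circ_adj d (f u) (f v).

(* chi_c(G) = n/d with gcd(n,d)=1: minimum of n'/d' over coprime n' >= 2d' >= 2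
   with G -> K_{n'/d'} *)
Definition is_circ_chrom (n d : nat) : Prop :=
  [/\ 0 < d, 2 * d <= n, coprime n d, circ_hom n d &
      forall n' d', 0 < d' -> 2 * d' <= n' -> coprime n' d' -> circ_hom n' d' ->
        n * d' <= n' * d].

Definition colorable (k : nat) : Prop :=
  exists f : T -> 'I_k, forall u v, e u v -> f u != f v.

Definition is_chrom (k : nat) : Prop :=
  colorable k /\ forall k', colorable k' -> k <= k'.

Definition independent (S : {set T}) : bool :=
  [forall u in S, forall v in S, ~~ e u v].

Definition maximal_independent (S : {set T}) : bool :=
  independent S && [forall S' : {set T}, (S \proper S') ==> ~~ independent S'].

Definition free_independent (S : {set T}) : bool :=
  independent S &&
  [exists M1 : {set T}, exists M2 : {set T},
     [&& M1 != M2, maximal_independent M1, maximal_independent M2,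
         S \subset M1 & S \subset M2]].

Definition free_partition (t : nat) : Prop :=
  exists f : T -> 'I_t, forall c : 'I_t, free_independent [set x | f x == c].

(* phi(G) = t (finite); phi(G) = infinity iff no such t exists *)
Definition is_free_chrom (t : nat) : Prop :=
  [/\ 0 < t, free_partition t & forall t', 0 < t' -> free_partition t' -> t <= t'].

End Graphs.

(* Main.v *)
Require Import Defs.
From Stdlib Require Import Classical.
From HB Require Import structures.
From mathcomp Require Import all_boot all_order all_algebra zify ring.
Set Implicit Arguments. Unset Strict Implicit.

Definition cadj (n d i j : nat) := (d <= absdiff i j) && (absdiff i j <= n - d).

Lemma hom_nat (T : finType) (e : rel T) n d (f : T -> nat) :
  (forall x, f x < n) -> (forall u v, e u v -> cadj n d (f u) (f v)) ->
  circ_hom e n d.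
Proof.
move=> hf hh; exists (fun x => Ordinal (hf x)) => u v /hh.
by rewrite /circ_adj /cadj /=.
Qed.

Lemma ext_max (T : finType) (e : rel T) (W : {set T}) :
  independent e W -> exists M, maximal_independent e M /\ W \subset M.
Proof.
move=> iW.
pose P := fun M : {set T} => independent e M && (W \subset M).
have PW : P W by rewrite /P iW subxx.
case: (arg_maxnP (fun M : {set T} => #|M|) PW) => M /andP[iM sWM] Mmax.
exists M; split=> //; rewrite /maximal_independent iM /=.
apply/forallP => S'; apply/implyP => pr; apply/negP => iS'.
have := Mmax S'; rewrite /P iS' (subset_trans sWM (proper_sub pr)) => /(_ isT).
by rewrite /= leqNgt proper_card.
Qed.

Definition rot n r i := if i + r < n then i + r else i + r - n.

Lemma rot_lt n r i : r <= n -> i < n -> rot n r i < n.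
Proof. rewrite /rot; case: ifP; lia. Qed.

Lemma rot_adj n d r i j : r <= n -> i < n -> j < n -> d <= n - d ->
  cadj n d i j -> cadj n d (rot n r i) (rot n r j).
Proof. rewrite /cadj /rot /absdiff; do 2 case: ifP; lia. Qed.
Lemma g_mono n d n' d' i j :
  n * d' = n' * d + 1 -> 0 < d' -> 1 < d -> 0 < i -> i < j -> j < n ->
  d <= j - i <= n - d ->
  d' + (i * d' - 1) %/ d <= (j * d' - 1) %/ d <= (i * d' - 1) %/ d + (n' - d').
Proof.
move=> hn hd' hd hi hij hjn /andP[h1 h2].
have cop : coprime d d'.
  apply/eqP; have : gcdn d d' %| 1.
    have -> : 1 = n * d' - n' * d by rewrite hn addKn.
    by rewrite dvdn_sub // ?dvdn_mull ?dvdn_gcdr ?dvdn_gcdl.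
  by rewrite dvdn1 => /eqP.
have hid : 0 < i * d' by rewrite muln_gt0 hi.
have hjd : j * d' = i * d' + (j - i) * d' by rewrite -mulnDl subnKC // ltnW.
have hji : d * d' <= (j - i) * d' by rewrite leq_mul2r h1 orbT.
have hji2 : (j - i) * d' <= (n - d) * d' by rewrite leq_mul2r h2 orbT.
have hnd : (n - d) * d' + d * d' = n' * d + 1 by rewrite -mulnDl subnK ?hn //; lia.
set A := i * d' - 1; set B := j * d' - 1.
have eA := divn_eq A d; have eB := divn_eq B d.
have rA := ltn_pmod A (ltnW hd); have rB := ltn_pmod B (ltnW hd).
set qa := A %/ d in eA *; set qb := B %/ d in eB *.
set ra := A %% d in eA rA *; set rb := B %% d in eB rB *.
have hB : B = A + (j - i) * d' by rewrite /A /B hjd; lia.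
move: hB hji hji2 hnd eA eB; rewrite /A /B.
set P := (j - i) * d'; set Q := (n - d) * d'; set dd := d * d'.
move=> hB hji hji2 hnd eA eB.
apply/andP; split.
  rewrite leqNgt; apply/negP => lt.
  have : (qb + 1) * d <= (qa + d') * d by rewrite leq_mul2r; apply/orP; right; lia.
  rewrite !mulnDl mul1n (mulnC d' d) -/dd. lia.
have hn' : d' <= n'.
  rewrite leqNgt; apply/negP => hl.
  have : (n' + 1) * d <= d' * d by rewrite leq_mul2r; apply/orP; right; lia.
  rewrite mulnDl mul1n (mulnC d' d) -/dd => hh.
  have : 0 < dd by rewrite muln_gt0 hd'; lia.
  lia.
rewrite leqNgt; apply/negP => lt.
have : (qa + (n' - d') + 1) * d <= qb * d by rewrite leq_mul2r; apply/orP; right; lia.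
rewrite !mulnDl mul1n mulnBl (mulnC d' d) -/dd => hq.
have hdn : dd <= n' * d.
  by rewrite /dd mulnC leq_mul2r hn' orbT.
have ePQ : P = Q by lia.
have eq3 : j - i = n - d.
  by move/eqP: ePQ; rewrite /P /Q eqn_mul2r; case/orP=> /eqP //; lia.
have : d %| i * d'.
  have -> : i * d' = (qa + 1) * d by rewrite mulnDl mul1n; lia.
  exact: dvdn_mull.
rewrite Gauss_dvdl // => /dvdn_leq; lia.
Qed.

Lemma g_lt n d n' d' i : n * d' = n' * d + 1 -> 0 < d' -> 1 < d -> 0 < i -> i < n ->
  (i * d' - 1) %/ d < n'.
Proof.
move=> hn hd' hd hi0 hi; have : 0 < i * d' by rewrite muln_gt0 hi0. rewrite ltn_divLR; last lia.
have : i * d' <= (n - 1) * d' by rewrite leq_mul2r; apply/orP; right; lia.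
rewrite mulnBl mul1n hn; lia.
Qed.

Lemma g_adj n d n' d' a b : n * d' = n' * d + 1 -> 0 < d' -> 1 < d ->
  0 < a -> a < n -> 0 < b -> b < n -> cadj n d a b ->
  cadj n' d' ((a * d' - 1) %/ d) ((b * d' - 1) %/ d).
Proof.
move=> hn hd' hd ha1 ha2 hb1 hb2; rewrite /cadj /absdiff.
case: (ltngtP a b) => hab.
- move=> h; have := @g_mono n d n' d' a b hn hd' hd ha1 hab hb2.
  have -> : d <= b - a <= n - d by lia.
  move=> /(_ isT); lia.
- move=> h; have := @g_mono n d n' d' b a hn hd' hd hb1 hab ha2.
  have -> : d <= a - b <= n - d by lia.
  move=> /(_ isT); lia.
- subst; lia.
Qed.

Lemma reduce (T : finType) (e : rel T) (e_sym : symmetric e) n d n' d' (f : T -> nat) :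
  n * d' = n' * d + 1 -> 0 < d' -> 1 < d -> 2 * d <= n ->
  (forall x, f x < n) -> (forall u v, e u v -> cadj n d (f u) (f v)) ->
  (forall u v, e u v -> f u = 0 -> f v = d -> False) ->
  circ_hom e n' d'.
Proof.
move=> hn hd' hd h2d hf hh hno.
pose f1 x := if f x == 0 then 1 else f x.
have f1lt x : f1 x < n by rewrite /f1; case: eqP => _; [lia| exact: hf].
have f1gt x : 0 < f1 x by rewrite /f1; case: eqP => //; lia.
apply: (@hom_nat _ _ _ _ (fun x => (f1 x * d' - 1) %/ d)).
  by move=> x; apply: (g_lt hn).
move=> u v euv; apply: (g_adj hn) => //; try exact: f1gt; try exact: f1lt.
have := hh _ _ euv; have := hf u; have := hf v.
have h1 : f u = 0 -> f v <> d by move=> a b; exact: (hno _ _ euv).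
have h2 : f v = 0 -> f u <> d by move=> a b; apply: (hno _ _ _ a b); rewrite e_sym.
move: h1 h2; rewrite /f1 /cadj /absdiff.
case: eqP => hu; case: eqP => hv; lia.
Qed.

Lemma approx n d : 1 < d -> 2 * d <= n -> coprime n d ->
  exists n' d', [/\ n * d' = n' * d + 1, 0 < d', 2 * d' <= n' & coprime n' d'].
Proof.
move=> hd h2 cop.
case: (Bezoutl n (ltnW hd)) => a ha.
rewrite gcdnC (eqP cop) => /dvdnP [k hk].
have a0 : 0 < a.
  case: a hk {ha} => // hk.
  have : d %| 1 by apply/dvdnP; exists k; rewrite -hk.
  rewrite dvdn1; lia.
have n2 : 2 * d < n.
  rewrite ltn_neqAle h2 andbT; apply/negP => /eqP hn.
  by move: cop; rewrite -hn /coprime gcdnC gcdnMl; lia.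
have kn : k * d <= n * d.
  have : a * n <= (d - 1) * n by rewrite leq_mul2r; apply/orP; right; lia.
  rewrite mulnBl mul1n (mulnC d n); have := @leq_pmulr n d (ltnW hd); lia.
have hnd : n * (d - a) = (n - k) * d + 1 by rewrite mulnBr mulnBl (mulnC a n) in hk *; lia.
exists (n - k), (d - a); split => //; first lia.
- have : 2 * d * (d - a) < n * (d - a) by rewrite ltn_mul2r; apply/andP; split; lia.
  rewrite hnd => hh.
  have : 2 * (d - a) * d <= (n - k) * d by lia.
  by rewrite leq_mul2r; case/orP => //; lia.
- apply/eqP; have : gcdn (n - k) (d - a) %| 1.
    have -> : 1 = n * (d - a) - (n - k) * d by rewrite hnd addKn.
    by apply: dvdn_sub; [apply: dvdn_mull; exact: dvdn_gcdr | apply: dvdn_mulr; exact: dvdn_gcdl].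
  by rewrite dvdn1 => /eqP.
Qed.

Lemma indep_win (T : finType) (e : rel T) n d (c2 : T -> nat) (W : {set T}) lo :
  0 < d -> (forall u v, e u v -> cadj n d (c2 u) (c2 v)) ->
  (forall x, x \in W -> lo <= c2 x < lo + d) -> independent e W.
Proof.
move=> hd hh hW; apply/forallP => u; apply/implyP => uW; apply/forallP => v.
apply/implyP => vW; apply/negP => /hh.
have := hW u uW; have := hW v vW; rewrite /cadj /absdiff; lia.
Qed.

Lemma freeS (T : finType) (e : rel T) (e_sym : symmetric e) n d (c2 : T -> nat) (S : {set T}) :
  1 < d -> 2 * d <= n -> coprime n d ->
  (forall n' d', 0 < d' -> 2 * d' <= n' -> coprime n' d' -> circ_hom e n' d' -> n * d' <= n' * d) ->
  (forall x, c2 x < n) -> (forall u v, e u v -> cadj n d (c2 u) (c2 v)) ->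
  (forall x, x \in S -> 0 < c2 x < d) ->
  free_independent e S.
Proof.
move=> hd h2 cop hmin hlt hh hS.
have iS : independent e S.
  by apply: (@indep_win _ _ n d c2 _ 1) => //; [lia | move=> x /hS; lia].
rewrite /free_independent iS /=.
case: (boolP [exists u, exists v, e u v && (c2 u == 0) && (c2 v == d)]).
- case/existsP => u /existsP [v /andP[/andP[euv /eqP cu] /eqP cv]].
  have [M1 [mM1 sM1]] := @ext_max _ e [set x | c2 x < d] ltac:(
    apply: (@indep_win _ _ n d c2 _ 0) => //; [lia | move=> x; rewrite inE; lia]).
  have [M2 [mM2 sM2]] := @ext_max _ e [set x | 0 < c2 x <= d] ltac:(
    apply: (@indep_win _ _ n d c2 _ 1) => //; [lia | move=> x; rewrite inE; lia]).
  apply/existsP; exists M1; apply/existsP; exists M2.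
  rewrite mM1 mM2 /=; apply/and3P; split.
  + apply/eqP => E.
    have uM : u \in M1 by apply: (subsetP sM1); rewrite inE cu; lia.
    have vM : v \in M1 by rewrite E; apply: (subsetP sM2); rewrite inE cv; lia.
    move: mM1 => /andP[/forallP/(_ u)/implyP/(_ uM)/forallP/(_ v)/implyP/(_ vM)] + _.
    by rewrite euv.
  + apply: subset_trans sM1; apply/subsetP => x xS; rewrite inE; have := hS x xS; lia.
  + apply: subset_trans sM2; apply/subsetP => x xS; rewrite inE; have := hS x xS; lia.
- move/existsPn => no.
  have [n' [d' [hn hd' h2' cop']]] := approx hd h2 cop.
  have : circ_hom e n' d'.
    apply: (@reduce _ _ e_sym n d n' d' c2) => // u v euv cu cv.
    by have := no u; move/existsPn/(_ v); rewrite euv cu cv !eqxx.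
  move/(hmin _ _ hd' h2' cop'); rewrite hn; lia.
Qed.
Import Order.TTheory GRing.Theory Num.Theory.

Lemma exmin (P : nat -> Prop) t0 : P t0 ->
  exists t, [/\ P t, t <= t0 & forall t', P t' -> t <= t'].
Proof.
elim/ltn_ind: t0 => t0 IH Pt0.
case: (classic (exists t', P t' /\ t' < t0)) => [[t' [Pt' lt]] | no].
  by have [t [Pt le mn]] := IH t' lt Pt'; exists t; split => //; lia.
exists t0; split => // t' Pt'; rewrite leqNgt; apply/negP => lt.
by apply: no; exists t'.
Qed.

Lemma chrom_bound (T : finType) (e : rel T) n d k :
  1 < d -> 2 * d <= n -> coprime n d ->
  (forall n' d', 0 < d' -> 2 * d' <= n' -> coprime n' d' -> circ_hom e n' d' -> n * d' <= n' * d) ->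
  colorable e k -> 2 <= k /\ n <= (2 * k - 1) * (d - 1).
Proof.
move=> hd h2 cop hmin [f hf].
have k2 : 2 <= k.
  rewrite leqNgt; apply/negP => k1.
  have : circ_hom e 2 1.
    exists (fun _ => ord0) => u v /hf /eqP H; exfalso; apply: H; apply: ord_inj.
    by move: (ltn_ord (f u)) (ltn_ord (f v)); lia.
  move/(hmin 2 1 isT isT isT); rewrite muln1 => hn.
  have hn2 : n = 2 * d by lia.
  by move: cop; rewrite hn2 /coprime gcdnC gcdnMl; lia.
split => //.
have : circ_hom e k 1.
  exists f => u v /hf; rewrite /circ_adj /absdiff; case: (f u) => a ha; case: (f v) => b hb.
  rewrite /= => /eqP hab; have : a <> b by move=> E; apply: hab; apply: ord_inj.
  lia.
move/(hmin k 1 isT k2 (coprimen1 k)); rewrite muln1 => hn.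
have hn' : n != k * d.
  apply/negP => /eqP E; move: cop; rewrite E /coprime gcdnC gcdnMl; lia.
have hlt : n < k * d by rewrite ltn_neqAle hn' hn.
clear -hlt hd k2; move: hlt hd k2; case: k => [|[|k]] //; case: d => [|[|d]] //; nia.
Qed.

Unset Implicit Arguments.
Set Strict Implicit.

Theorem mainTheorem2 (T : finType) (e : rel T)
  (e_sym : symmetric e) (e_irr : irreflexive e) (n d : nat) :
  is_circ_chrom e n d -> 2 <= d ->
  exists t : nat,
    [/\ is_free_chrom e t,
        (t%:Z <= Num.ceil ((n%:Q / d%:Q) * (1 + 1 / (d%:Q - 1))))%R &
        forall k : nat, is_chrom e k ->
          (Num.ceil ((n%:Q / d%:Q) * (1 + 1 / (d%:Q - 1))) <= 2 * k%:Z - 1)%R].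
Proof.
move=> [hd0 h2 cop [c hc] hmin] hd.
set t0 := (n - 1) %/ (d - 1) + 1.
have cl x : (c x : nat) %/ (d - 1) < t0.
  rewrite /t0 addn1 ltnS leq_div2r //; have := ltn_ord (c x); lia.
have fp : free_partition e t0.
  exists (fun x => Ordinal (cl x)) => j.
  set a := (j : nat) * (d - 1).
  pose r := if a == 0 then 1 else n + 1 - a.
  have rn : r <= n by rewrite /r; case: eqP; lia.
  apply: (@freeS _ _ e_sym n d (fun x => rot n r (c x))) => //.
  - by move=> x; apply: rot_lt.
  - move=> u v /hc huv; apply: rot_adj => //; lia.
  - move=> x; rewrite inE => /eqP /(congr1 val) /= hj.
    have ed := divn_eq (c x) (d - 1); have em := ltn_pmod (c x) (ltnW hd).
    rewrite hj -/a in ed; have := ltn_ord (c x).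
    rewrite /rot /r; case: eqP => ha; case: ifP; lia.
have [t [[tpos tfp] tle tmin]] := @exmin (fun t => 0 < t /\ free_partition e t) t0 (conj (ltac:(by rewrite /t0 addn1) : 0 < t0) fp).
exists t; split.
- by split => // t' t'0 fp'; apply: tmin.
- set x := (_ * _)%R.
  have hx : x = (n%:R / (d - 1)%:R)%R :> rat.
    have d0 : (d%:R != 0 :> rat)%R by rewrite pnatr_eq0; lia.
    have d1 : ((d - 1)%:R != 0 :> rat)%R by rewrite pnatr_eq0; lia.
    move: d1; rewrite /x natrB; last lia.
    move=> d1; field; by apply/andP.
  suff : ((t - 1)%:Z < Num.ceil x)%R by lia.
  rewrite ceil_gt_int -pmulrn hx ltr_pdivlMr; last by rewrite ltr0n; lia.
  rewrite -natrM ltr_nat.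
  have : (t - 1) * (d - 1) <= (n - 1) %/ (d - 1) * (d - 1).
    by rewrite leq_mul2r; apply/orP; right; rewrite /t0 in tle; lia.
  have := leq_trunc_div (n - 1) (d - 1); lia.
- move=> k [/(chrom_bound hd h2 cop hmin) [k2 hk] _].
  set x := (_ * _)%R.
  have hx : x = (n%:R / (d - 1)%:R)%R :> rat.
    have d0 : (d%:R != 0 :> rat)%R by rewrite pnatr_eq0; lia.
    have d1 : ((d - 1)%:R != 0 :> rat)%R by rewrite pnatr_eq0; lia.
    move: d1; rewrite /x natrB; last lia.
    move=> d1; field; by apply/andP.
  suff : (Num.ceil x <= (2 * k - 1)%:Z)%R by lia.
  rewrite ceil_le_int -pmulrn hx ler_pdivrMr; last by rewrite ltr0n; lia.
  by rewrite -natrM ler_nat.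
Qed.
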